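(* Let $\mathbb{D}$ be a division ring, let $2\le m,n<\infty$, let $P$ be an $n\times m$ matrix over $\mathbb{D}$ with $\operatorname{rank}P=r$, and let $\mathcal{A}=\mathfrak{M}(\mathbb{D}, m, n, P)$. Then: (1) if $r\ge 2$, then $\mathcal{A}=\sum[\mathcal{A},\mathcal{A}][\mathcal{A},\mathcal{A}]$, i.e. every element of $\mathcal{A}$ is a finite sum of products of pairs of commutators; (2) if $r=1$, then $\mathcal{A}=\sum[\mathcal{A},\mathcal{A}][\mathcal{A},\mathcal{A}]$ if and only if $\mathbb{D}$ is not commutative.
   Context: $\mathfrak{M}(\mathbb{D}, m, n, P)$ denotes the ring of all $m\times n$ matrices over the division ring $\mathbb{D}$ with entrywise addition and multiplication $A\bullet B = APB$. The commutator is $[x,y]=x\bullet y-y\bullet x$; for subsets $X,Y$, $[X,Y]=\{[x,y]:x\in X,y\in Y\}$ and $XY=\{x\bullet y: x\in X, y\in Y\}$. $\sum[\mathcal{A},\mathcal{A}][\mathcal{A},\mathcal{A}]$ denotes the set of all finite sums of elements of $[\mathcal{A},\mathcal{A}][\mathcal{A},\mathcal{A}]$. *)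

(* Defs.v *)
From HB Require Import structures.
From mathcomp Require Import all_boot all_order all_algebra.
Set Implicit Arguments. Unset Strict Implicit. Unset Printing Implicit Defensive.
Import GRing.Theory.
Local Open Scope ring_scope.

Definition is_division_ring (D : unitRingType) : Prop :=
  forall x : D, x != 0 -> x \is a GRing.unit.

(* Rank of a matrix over a division ring, defined as the inner rank:
   the least k such that P factors as A *m B with A : p x k, B : k x q.
   Over a division ring this coincides with the row rank = column rank. *)
Definition mx_factors_through (D : pzRingType) (p q k : nat)
  (P : 'M[D]_(p, q)) : Prop :=
  exists (A : 'M[D]_(p, k)) (B : 'M[D]_(k, q)), P = A *m B.

Definition mx_rank_is (D : pzRingType) (p q : nat) (P : 'M[D]_(p, q))
  (r : nat) : Prop :=
  @mx_factors_through D p q r P /\ (forall k, (k < r)%N -> ~ @mx_factors_through D p q k P).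

(* The ring M(D, m, n, P): m x n matrices, product A • B = A P B. *)
Definition sprod (D : pzRingType) (m n : nat) (P : 'M[D]_(n, m))
  (A B : 'M[D]_(m, n)) : 'M[D]_(m, n) := A *m P *m B.

Definition scomm (D : pzRingType) (m n : nat) (P : 'M[D]_(n, m))
  (A B : 'M[D]_(m, n)) : 'M[D]_(m, n) := sprod P A B - sprod P B A.

Definition in_sum_comm_comm (D : pzRingType) (m n : nat) (P : 'M[D]_(n, m))
  (X : 'M[D]_(m, n)) : Prop :=
  exists s : seq ('M[D]_(m, n) * 'M[D]_(m, n) * 'M[D]_(m, n) * 'M[D]_(m, n)),
    X = \sum_(t <- s)
          sprod P (scomm P t.1.1.1 t.1.1.2) (scomm P t.1.2 t.2).

(* Main.v *)
Require Import Defs.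
From HB Require Import structures.
From mathcomp Require Import all_boot all_order all_algebra.
From Stdlib Require Import Classical.
Import GRing.Theory.
Local Open Scope ring_scope.
Set Implicit Arguments. Unset Strict Implicit.


Lemma S0 (D : pzRingType) m n (P : 'M[D]_(n, m)) : in_sum_comm_comm P 0.
Proof. by exists [::]; rewrite big_nil. Qed.

Lemma Sprod (D : pzRingType) m n (P : 'M[D]_(n, m)) a b c d :
  in_sum_comm_comm P (sprod P (scomm P a b) (scomm P c d)).
Proof. by exists [:: (a, b, c, d)]; rewrite big_seq1. Qed.

Lemma SD (D : pzRingType) m n (P : 'M[D]_(n, m)) X Y :
  in_sum_comm_comm P X -> in_sum_comm_comm P Y -> in_sum_comm_comm P (X + Y).
Proof. by move=> [s1 ->] [s2 ->]; exists (s1 ++ s2); rewrite big_cat. Qed.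

Lemma scommC (D : pzRingType) m n (P : 'M[D]_(n, m)) a b :
  scomm P b a = - scomm P a b.
Proof. by rewrite /scomm opprB. Qed.

Lemma sprodNl (D : pzRingType) m n (P : 'M[D]_(n, m)) a b :
  sprod P (- a) b = - sprod P a b.
Proof. by rewrite /sprod !mulNmx. Qed.

Lemma SN (D : pzRingType) m n (P : 'M[D]_(n, m)) X :
  in_sum_comm_comm P X -> in_sum_comm_comm P (- X).
Proof.
move=> [s ->]; exists (map (fun t => (t.1.1.2, t.1.1.1, t.1.2, t.2)) s).
rewrite big_map -sumrN. apply: eq_bigr => t _ /=.
by rewrite scommC sprodNl opprK.
Qed.

Lemma SB (D : pzRingType) m n (P : 'M[D]_(n, m)) X Y :
  in_sum_comm_comm P X -> in_sum_comm_comm P Y -> in_sum_comm_comm P (X - Y).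
Proof. by move=> hX hY; apply: SD => //; apply: SN. Qed.

Lemma Ssum (D : pzRingType) m n (P : 'M[D]_(n, m)) k (F : 'I_k -> 'M[D]_(m, n)) :
  (forall i, in_sum_comm_comm P (F i)) -> in_sum_comm_comm P (\sum_i F i).
Proof.
move=> h; apply: (big_ind (in_sum_comm_comm P)) => //; first exact: S0.
exact: SD.
Qed.

Lemma sprodA (D : pzRingType) m n (P : 'M[D]_(n, m)) a b c :
  sprod P (sprod P a b) c = sprod P a (sprod P b c).
Proof. by rewrite /sprod !mulmxA. Qed.
Lemma sprodBl (D : pzRingType) m n (P : 'M[D]_(n, m)) a b c :
  sprod P (a - b) c = sprod P a c - sprod P b c.
Proof. by rewrite /sprod !mulmxBl. Qed.
Lemma sprodBr (D : pzRingType) m n (P : 'M[D]_(n, m)) a b c :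
  sprod P a (b - c) = sprod P a b - sprod P a c.
Proof. by rewrite /sprod !mulmxBr. Qed.

Lemma st1 (D : pzRingType) m n (P : 'M[D]_(n, m)) a p q :
  sprod P a (scomm P p q) = scomm P (sprod P a p) q - sprod P (scomm P a q) p.
Proof.
rewrite /scomm sprodBr sprodBl !sprodA.
by rewrite opprB addrA subrK.
Qed.
Lemma st2 (D : pzRingType) m n (P : 'M[D]_(n, m)) p r s :
  sprod P p (scomm P r s) = scomm P (sprod P p r) s - sprod P (scomm P p s) r.
Proof. exact: st1. Qed.
Lemma st3 (D : pzRingType) m n (P : 'M[D]_(n, m)) p s r :
  sprod P (scomm P p s) r = scomm P p (sprod P s r) - sprod P s (scomm P p r).
Proof.
rewrite /scomm sprodBr sprodBl !sprodA.
by rewrite opprB addrA subrK.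
Qed.
Lemma st5 (D : pzRingType) m n (P : 'M[D]_(n, m)) a s :
  sprod P s (scomm P a s) = scomm P (sprod P s a) s.
Proof. by rewrite /scomm sprodBr !sprodA. Qed.

Lemma five (D : pzRingType) m n (P : 'M[D]_(n, m)) a p r s :
  in_sum_comm_comm P (sprod P a (sprod P (scomm P p s) (scomm P r s))).
Proof.
have e1 := st1 P a p s.
have e2 := st2 P p r s.
have e3 := st3 P p s r.
have e4 := st3 P a s s.
have e5 := st5 P a s.
have f1 : sprod P a (sprod P (scomm P p s) (scomm P r s)) =
  sprod P (scomm P (sprod P a p) s) (scomm P r s)
  - sprod P (scomm P a s) (sprod P p (scomm P r s)).
  by rewrite -sprodA e1 sprodBl sprodA.
have f2 : sprod P (scomm P a s) (sprod P p (scomm P r s)) =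
  sprod P (scomm P a s) (scomm P (sprod P p r) s)
  - sprod P (scomm P a s) (sprod P (scomm P p s) r).
  by rewrite e2 sprodBr.
have f3 : sprod P (scomm P a s) (sprod P (scomm P p s) r) =
  sprod P (scomm P a s) (scomm P p (sprod P s r))
  - sprod P (sprod P (scomm P a s) s) (scomm P p r).
  by rewrite e3 sprodBr sprodA.
have f4 : sprod P (sprod P (scomm P a s) s) (scomm P p r) =
  sprod P (scomm P a (sprod P s s)) (scomm P p r)
  - sprod P (scomm P (sprod P s a) s) (scomm P p r).
  by rewrite e4 sprodBl e5.
rewrite f1 f2 f3 f4.
apply: SB; first exact: Sprod.
apply: SB; first exact: Sprod.
apply: SB; first exact: Sprod.
by apply: SB; apply: Sprod.
Qed.


Lemma gen_aux (D : pzRingType) m n (P : 'M[D]_(n, m)) k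
  (K : 'M[D]_(k.+1, n)) (L : 'M[D]_(m, k.+1)) (hKL : K *m P *m L = 1%:M) :
  (forall p (M : 'M[D]_(k.+1, p)), K *m (P *m (L *m M)) = M) /\
  K *m (P *m L) = 1%:M /\
  (forall p (M : 'M[D]_(m, p)), K *m (P *m ((1%:M - L *m (K *m P)) *m M)) = 0) /\
  (forall p (M : 'M[D]_(k.+1, p)), (1%:M - P *m (L *m K)) *m (P *m (L *m M)) = 0).
Proof.
have h1 : forall p (M : 'M[D]_(k.+1, p)), K *m (P *m (L *m M)) = M.
  by move=> p M; rewrite !mulmxA hKL mul1mx.
split=> //; split; first by rewrite mulmxA.
split=> p M.
  by rewrite !(mulmxBl, mulmxBr, mul1mx) -!mulmxA h1 subrr.
by rewrite !(mulmxBl, mulmxBr, mul1mx) -!mulmxA h1 subrr.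
Qed.

Lemma gen (D : pzRingType) m n (P : 'M[D]_(n, m)) k
  (K : 'M[D]_(k.+1, n)) (L : 'M[D]_(m, k.+1)) (hKL : K *m P *m L = 1%:M)
  (P0 R0 S0 h : 'M[D]_(k.+1)) :
  h *m ((P0 *m S0 - S0 *m P0) *m (R0 *m S0 - S0 *m R0)) = 1%:M ->
  ((P0 *m S0 - S0 *m P0) *m (R0 *m S0 - S0 *m R0)) *m h = 1%:M ->
  forall X, in_sum_comm_comm P X.
Proof.
set U0 := P0 *m S0 - S0 *m P0; set W0 := R0 *m S0 - S0 *m R0.
move=> hg1 hg2 X.
have [hK [hK0 [E1 E2]]] := gen_aux hKL.
have hhg : forall p (M : 'M[D]_(k.+1, p)), h *m (U0 *m (W0 *m M)) = M.
  by move=> p M; rewrite !mulmxA -(mulmxA h) hg1 mul1mx.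
have hgh : forall p (M : 'M[D]_(k.+1, p)), U0 *m (W0 *m (h *m M)) = M.
  by move=> p M; rewrite !mulmxA hg2 mul1mx.
pose iota (Y : 'M[D]_(k.+1)) := L *m Y *m K.
have ci : forall Y Z, scomm P (iota Y) (iota Z) = iota (Y *m Z - Z *m Y).
  by move=> Y Z; rewrite /scomm /sprod /iota mulmxBr mulmxBl -!mulmxA !hK.
have pi : forall Y Z, sprod P (iota Y) (iota Z) = iota (Y *m Z).
  by move=> Y Z; rewrite /sprod /iota -!mulmxA !hK.
have cU : scomm P (iota P0) (iota S0) = iota U0 by rewrite ci.
have cW : scomm P (iota R0) (iota S0) = iota W0 by rewrite ci.
have cx : forall Z, scomm P ((1%:M - (L *m (K *m P))) *m Z *m K) (L *m K) = (1%:M - (L *m (K *m P))) *m Z *m K.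
  move=> Z; rewrite /scomm /sprod -!mulmxA hK E1.
  by rewrite mulmx0 subr0.
have cy : forall V : 'M[D]_(k.+1, n), scomm P (L *m K) (L *m V *m (1%:M - (P *m (L *m K)))) = L *m V *m (1%:M - (P *m (L *m K))).
  move=> V; rewrite /scomm /sprod -!mulmxA hK.
  by rewrite E2 !mulmx0 subr0.
have split : X = (L *m (K *m P)) *m X *m (P *m (L *m K)) + (L *m (K *m P)) *m X *m (1%:M - (P *m (L *m K)))
   + (1%:M - (L *m (K *m P))) *m X *m (P *m (L *m K)) + (1%:M - (L *m (K *m P))) *m X *m (1%:M - (P *m (L *m K))).
  rewrite -!addrA -[in X in _ + (_ + X)]mulmxDr [P *m (L *m K) + _]addrC subrK mulmx1.
  rewrite addrA -mulmxDr [P *m (L *m K) + _]addrC subrK mulmx1.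
  by rewrite -mulmxDl [L *m (K *m P) + _]addrC subrK mul1mx.
rewrite split; apply: SD; [apply: SD; [apply: SD|] |].
- have -> : (L *m (K *m P)) *m X *m (P *m (L *m K)) = sprod P (L *m K *m P *m X *m P *m L *m h *m K)
     (sprod P (scomm P (iota P0) (iota S0)) (scomm P (iota R0) (iota S0))).
    rewrite cU cW pi /sprod /iota   -!mulmxA hK.
    by rewrite hhg.
  exact: five.
- have -> : (L *m (K *m P)) *m X *m (1%:M - (P *m (L *m K))) = sprod P (scomm P (iota P0) (iota S0))
     (scomm P (L *m K) (L *m (W0 *m h *m K *m P *m X) *m (1%:M - (P *m (L *m K))))).
    rewrite cy cU /sprod /iota  -!mulmxA hK.
    by rewrite hgh.
  exact: Sprod.
- have -> : (1%:M - (L *m (K *m P))) *m X *m (P *m (L *m K)) = sprod P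
     (scomm P ((1%:M - (L *m (K *m P))) *m (X *m P *m L *m h *m U0) *m K) (L *m K))
     (scomm P (iota R0) (iota S0)).
    rewrite cx cW /sprod /iota  -!mulmxA hK.
    by rewrite hhg.
  exact: Sprod.
have hX : X = \sum_(l < n) (X *m delta_mx l (0 : 'I_k.+1)) *m delta_mx 0 l.
  under eq_bigr do rewrite -mulmxA mul_delta_mx.
  by rewrite -mulmx_sumr -mx1_sum_delta mulmx1.
rewrite [in X in (_ *m X) *m _]hX mulmx_sumr mulmx_suml.
apply: Ssum => l.
set Z := X *m delta_mx l 0; set V := delta_mx 0 l.
have -> : (1%:M - (L *m (K *m P))) *m (Z *m V) *m (1%:M - (P *m (L *m K))) =
   sprod P (scomm P ((1%:M - (L *m (K *m P))) *m Z *m K) (L *m K)) (scomm P (L *m K) (L *m V *m (1%:M - (P *m (L *m K))))).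
  by rewrite cx cy /sprod -!mulmxA hK.
exact: Sprod.
Qed.


Lemma col_linv (D : unitRingType) (hD : is_division_ring D) n (a : 'M[D]_(n, 1)) :
  a != 0 -> exists w : 'M[D]_(1, n), w *m a = 1%:M.
Proof.
move=> ha.
have [i hi] : exists i, a i 0 != 0.
  apply/existsP; apply: contraR ha; rewrite negb_exists => /forallP h.
  apply/eqP/matrixP => x y; rewrite !ord1 mxE; exact/eqP/negbNE/h.
exists (\row_j (if j == i then (a i 0)^-1 else 0)).
apply/matrixP => x y; rewrite !ord1 !mxE (bigD1 i) //= big1.
  by rewrite mxE eqxx addr0 mulVr //; apply: hD.
by move=> j /negbTE hj; rewrite mxE hj mul0r.
Qed.

Lemma row_rinv (D : unitRingType) (hD : is_division_ring D) m (b : 'M[D]_(1, m)) :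
  b != 0 -> exists v : 'M[D]_(m, 1), b *m v = 1%:M.
Proof.
move=> hb.
have [i hi] : exists i, b 0 i != 0.
  apply/existsP; apply: contraR hb; rewrite negb_exists => /forallP h.
  apply/eqP/matrixP => x y; rewrite !ord1 mxE; exact/eqP/negbNE/h.
exists (\col_j (if j == i then (b 0 i)^-1 else 0)).
apply/matrixP => x y; rewrite !ord1 !mxE (bigD1 i) //= big1.
  by rewrite mxE eqxx addr0 mulrV //; apply: hD.
by move=> j /negbTE hj; rewrite mxE hj mulr0.
Qed.

Lemma linv_or_factor (D : unitRingType) (hD : is_division_ring D) n r
  (A : 'M[D]_(n, r.+1)) :
  (exists A' : 'M[D]_(r.+1, n), A' *m A = 1%:M) \/
  (exists (A2 : 'M[D]_(n, r)) (C : 'M[D]_(r, r.+1)), A = A2 *m C).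
Proof.
elim: r A => [|r IH] A.
  have [->|hA] := eqVneq A 0.
    by right; exists 0, 0; rewrite mul0mx.
  by left; apply: col_linv.
pose A0 : 'M[D]_(n, 1 + r.+1) := A.
have hA : A = row_mx (lsubmx A0) (rsubmx A0) by rewrite hsubmxK.
move: (lsubmx A0) (rsubmx A0) hA => a A1 ->.
have [->|ha] := eqVneq a 0.
  right; exists A1, (row_mx (0 : 'M_(r.+1, 1)) 1%:M).
  by have := mul_mx_row A1 (0 : 'M_(r.+1,1)) 1%:M; rewrite mulmx0 mulmx1 => ->.
have [w hw] := col_linv hD ha.
pose A1' := A1 - a *m (w *m A1).
have hwA1' : w *m A1' = 0.
  by rewrite /A1' mulmxBr (mulmxA w a) hw mul1mx subrr.
have eA1 : A1 = A1' + a *m (w *m A1) by rewrite subrK.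
have [[L hL]|[A2 [C hC]]] := IH A1'.
  left; pose L2 := L - L *m a *m w.
  have hL2a : L2 *m a = 0 by rewrite /L2 mulmxBl -(mulmxA (L *m a)) hw mulmx1 subrr.
  have hL2A1 : L2 *m A1 = 1%:M.
    rewrite eA1 mulmxDr mulmxA hL2a mul0mx addr0.
    by rewrite mulmxBl hL -!mulmxA hwA1' !mulmx0 subr0.
  exists (col_mx (w - w *m A1 *m L2) L2).
  change (col_mx (w - w *m A1 *m L2) L2 *m (row_mx a A1 : 'M_(n, 1 + r.+1))
     = (1%:M : 'M_(1 + r.+1))).
  rewrite mul_col_row.
  rewrite hL2a hL2A1 mulmxBl mulmxBl -!mulmxA hL2a hL2A1 !mulmx0 subr0 hw.
  by rewrite mulmx1 subrr -scalar_mx_block.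
right; exists (row_mx a A2), (block_mx 1%:M (w *m A1) 0 C).
change ((row_mx a A1 : 'M_(n, 1 + r.+1)) =
  (row_mx a A2 : 'M_(n, 1 + r)) *m block_mx (1%:M : 'M_1) (w *m A1) 0 C).
by rewrite mul_row_block mulmx1 mulmx0 addr0 -hC addrC -eA1.
Qed.

Lemma rinv_or_factor (D : unitRingType) (hD : is_division_ring D) m r
  (B : 'M[D]_(r.+1, m)) :
  (exists B' : 'M[D]_(m, r.+1), B *m B' = 1%:M) \/
  (exists (C : 'M[D]_(r.+1, r)) (B2 : 'M[D]_(r, m)), B = C *m B2).
Proof.
elim: r B => [|r IH] B.
  have [->|hB] := eqVneq B 0.
    by right; exists 0, 0; rewrite mul0mx.
  by left; apply: row_rinv.
pose B0 : 'M[D]_(1 + r.+1, m) := B.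
have hB : B = col_mx (usubmx B0) (dsubmx B0) by rewrite vsubmxK.
move: (usubmx B0) (dsubmx B0) hB => b B1 ->.
have [->|hb] := eqVneq b 0.
  right; exists (col_mx (0 : 'M_(1, r.+1)) 1%:M), B1.
  by have := mul_col_mx (0 : 'M_(1, r.+1)) 1%:M B1; rewrite mul0mx mul1mx => ->.
have [v hv] := row_rinv hD hb.
pose B1' := B1 - (B1 *m v) *m b.
have hB1'v : B1' *m v = 0 by rewrite /B1' mulmxBl -(mulmxA (B1 *m v)) hv mulmx1 subrr.
have eB1 : B1 = B1' + (B1 *m v) *m b by rewrite subrK.
have [[R hR]|[C [B2 hC]]] := IH B1'.
  left; pose R2 := R - v *m b *m R.
  have hbR2 : b *m R2 = 0 by rewrite /R2 mulmxBr !mulmxA hv mul1mx subrr.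
  have hB1R2 : B1 *m R2 = 1%:M.
    rewrite eB1 mulmxDl -mulmxA hbR2 mulmx0 addr0.
    by rewrite mulmxBr hR !mulmxA hB1'v !mul0mx subr0.
  exists (row_mx (v - R2 *m B1 *m v) R2).
  change ((col_mx b B1 : 'M_(1 + r.+1, m)) *m row_mx (v - R2 *m B1 *m v) R2
     = (1%:M : 'M_(1 + r.+1))).
  rewrite mul_col_row.
  rewrite hbR2 hB1R2 !mulmxBr !mulmxA hbR2 hB1R2 !mul0mx subr0 hv.
  by rewrite mul1mx subrr -scalar_mx_block.
right; exists (block_mx 1%:M 0 (B1 *m v) C), (col_mx b B2).
change ((col_mx b B1 : 'M_(1 + r.+1, m)) =
  block_mx (1%:M : 'M_1) 0 (B1 *m v) C *m (col_mx b B2 : 'M_(1 + r, m))).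
by rewrite mul_block_col mul1mx mul0mx addr0 -hC addrC -eB1.
Qed.


Lemma J2 (D : pzRingType) :
  let P0 := (delta_mx 1 0 - delta_mx 0 1 : 'M[D]_2) in
  let S0 := (delta_mx 0 0 : 'M[D]_2) in
  (1%:M : 'M[D]_2) *m ((P0 *m S0 - S0 *m P0) *m (P0 *m S0 - S0 *m P0)) = 1%:M /\
  ((P0 *m S0 - S0 *m P0) *m (P0 *m S0 - S0 *m P0)) *m 1%:M = 1%:M.
Proof.
move=> P0 S0.
suff e : (P0 *m S0 - S0 *m P0) *m (P0 *m S0 - S0 *m P0) = 1%:M.
  by rewrite mul1mx mulmx1 e.
apply/matrixP => i j; rewrite /P0 /S0.
rewrite !mxE !big_ord_recr !big_ord0 /= !mxE.
rewrite !big_ord_recr !big_ord0 /= !mxE /=.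
case: i => [[|[|//]] hi]; case: j => [[|[|//]] hj] /=;
  rewrite !(mul0r, mulr0, mul1r, mulr1, add0r, addr0, subr0, sub0r, opprK, mulN1r, mulrN1, mulNr, mulrN, oppr0) //.
Qed.

Lemma mx11_comm (D : pzRingType) (hc : forall x y : D, x * y = y * x)
  (u v : 'M[D]_1) : u *m v = v *m u.
Proof. by apply/matrixP => i j; rewrite !ord1 !mxE !big_ord1 hc. Qed.

Unset Implicit Arguments.

Theorem theorem2p5 (D : unitRingType) (hD : is_division_ring D)
  (m n : nat) (hm : (2 <= m)%N) (hn : (2 <= n)%N)
  (P : 'M[D]_(n, m)) (r : nat) (hr : mx_rank_is P r) :
  ((2 <= r)%N -> forall X : 'M[D]_(m, n), in_sum_comm_comm P X) /\
  (r = 1%N ->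
     ((forall X : 'M[D]_(m, n), in_sum_comm_comm P X) <->
      ~ (forall x y : D, x * y = y * x))).
Proof.
case: hr => [[A [B hAB]] hmin].
have inv : forall r' (A : 'M[D]_(n, r'.+1)) (B : 'M[D]_(r'.+1, m)),
    P = A *m B -> (forall k, (k < r'.+1)%N -> ~ mx_factors_through k P) ->
    exists (A' : 'M[D]_(r'.+1, n)) (B' : 'M[D]_(m, r'.+1)),
      A' *m A = 1%:M /\ B *m B' = 1%:M.
  move=> r' A0 B0 hP0 hm0.
  have [[A' hA']|[A2 [C hC]]] := linv_or_factor hD A0; last first.
    by exfalso; apply: (hm0 r' (ltnSn r')); exists A2, (C *m B0); rewrite hP0 hC mulmxA.
  have [[B' hB']|[C [B2 hC]]] := rinv_or_factor hD B0; last first.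
    by exfalso; apply: (hm0 r' (ltnSn r')); exists (A0 *m C), B2; rewrite hP0 hC mulmxA.
  by exists A', B'.
split.
  case: r A B hAB hmin => [|r'] A B hAB hmin hr2 X //.
  have [A' [B' [hA' hB']]] := inv r' A B hAB hmin.
  pose K := (pid_mx 2 : 'M[D]_(2, r'.+1)) *m A'.
  pose L := B' *m (pid_mx 2 : 'M[D]_(r'.+1, 2)).
  have hKL : K *m P *m L = 1%:M.
    rewrite /K /L hAB !mulmxA -(mulmxA _ A') hA' mulmx1 -(mulmxA _ B) hB' mulmx1.
    by rewrite mul_pid_mx minnn (minn_idPr hr2) pid_mx_1.
  have [hg1 hg2] := J2 D.
  exact: (gen hKL hg1 hg2).
move=> hr1; subst r.
have [A' [B' [hA' hB']]] := inv 0%N A B hAB hmin.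
have hKL : A' *m P *m B' = 1%:M.
  by rewrite hAB !mulmxA hA' mul1mx hB'.
split.
  move=> hall hc; have [s hs] := hall (B' *m A').
  have phi_prod : forall X Y, B *m sprod P X Y *m A = (B *m X *m A) *m (B *m Y *m A).
    by move=> X Y; rewrite /sprod hAB !mulmxA.
  have phi_comm : forall X Y, B *m scomm P X Y *m A = 0.
    by move=> X Y; rewrite /scomm mulmxBr mulmxBl !phi_prod (mx11_comm hc) subrr.
  have e : B *m (B' *m A') *m A = 1%:M by rewrite mulmxA hB' mul1mx hA'.
  move: e; rewrite hs mulmx_sumr mulmx_suml big1; last first.
    by move=> t _; rewrite phi_prod phi_comm mul0mx.
  move=> /(congr1 (fun M : 'M[D]_1 => M 0 0)); rewrite !mxE /= => /eqP.
  by rewrite eq_sym oner_eq0.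
move=> hnc.
have [x [y hxy]] : exists x y : D, x * y != y * x.
  apply: NNPP => hne; apply: hnc => x y; apply/eqP; apply: negbNE; apply/negP => h.
  by apply: hne; exists x, y.
pose c := x * y - y * x.
have hc : c \is a GRing.unit by apply: hD; rewrite subr_eq0.
have ec : (x%:M : 'M[D]_1) *m y%:M - y%:M *m x%:M = c%:M.
  by rewrite -!scalar_mxM -raddfB.
apply: (gen hKL (P0 := x%:M) (R0 := x%:M) (S0 := y%:M) (h := (c^-1 * c^-1)%:M)).
  by rewrite ec -!scalar_mxM mulrA -(mulrA c^-1 c^-1) mulVr // mulr1 mulVr.
by rewrite ec -!scalar_mxM -mulrA (mulrA c c^-1) mulrV // mul1r mulrV.
Qed.
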